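(* Let $\tilde F:\mathbb C^6\to\mathbb C^6$ be a homogeneous (polynomial, degree $p$) vector field equivariant with respect to the $[4,8]$ representation of $\Gamma=D_4\dot+T^2$. Then there exists an $\mathcal E(2)$-equivariant polynomial vector field $\mathcal F$ of degree $p$ on $E_\kappa$ with $\tilde F=\mathcal F|_{E^c}$ if and only if for every $\theta\in\mathbb R$, $R_\theta\tilde F(\Phi)=\tilde F(R_\theta\Phi)$ for all $\Phi\in E^c$ with $R_\theta\Phi\in E^c$.
   Context: Integers $l_1>l_2>n_2>0$ with $\kappa^2=l_1^2=l_2^2+n_2^2$; $A(\kappa)=\{k:|k|=\kappa\}$, $E_\kappa$ = space of $a:A(\kappa)\to\mathbb C$ with $\sum|a(k)|<\infty$. Wave vectors $q_1=(l_1,0)$, $q_2=(0,l_1)$, $p_1=(l_2,n_2)$, $p_2=(l_2,-n_2)$, $p_3=(n_2,l_2)$, $p_4=(n_2,-l_2)$, $\tilde A=\{\pm q_i,\pm p_j\}$; $E^c\subset E_\kappa$ is the real space of $a$ supported in $\tilde A$ with $a(-k)=\overline{a(k)}$, identified with $\mathbb C^6$ via $z_i=a(q_i)$, $w_j=a(p_j)$. $\mathcal E(2)$ acts by $(\gamma a)(k)=a(\gamma^{-1}k)$ ($\gamma\in O(2)$) and $(T_{s,t}a)(k)=e^{-i(sk_x+tk_y)}a(k)$; $R_\theta$ is counterclockwise rotation; $\Gamma$ is generated by $\gamma_1(x,y)=(-x,y)$, $\gamma_2(x,y)=(y,x)$ and $T_{s,t}$ with $(s,t)\in(\mathbb R/2\pi\mathbb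 Z)^2$, which preserve $E^c$. An $\mathcal E(2)$-equivariant polynomial vector field of degree $p$ on $E_\kappa$ is a map on finitely supported $a$ of the form $\mathcal F(a)(k)=\sum_{k_1,\dots,k_p\in A(\kappa)}P(k,k_1,\dots,k_p)a(k_1)\cdots a(k_p)$ (finitely many nonzero terms) commuting with all of $\mathcal E(2)$. *)

(* Defs.v *)
From Stdlib Require Import Reals List.
From Coquelicot Require Import Coquelicot.
Import ListNotations.
Open Scope R_scope.

(** Points of R^2 (wave vectors) and fields a : R^2 -> C.  An element of E_kappa
    is represented by its values; only values on the circle A(kappa) matter. *)
Definition pt := (R * R)%type.
Definition field := pt -> C.

Definition pt_eqb (k k' : pt) : bool :=
  if Req_EM_T (fst k) (fst k') then
    (if Req_EM_T (snd k) (snd k') then true else false)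
  else false.

Definition pt_opp (k : pt) : pt := (- fst k, - snd k).

Definition on_circle (kappa : R) (k : pt) : Prop :=
  sqrt (fst k ^ 2 + snd k ^ 2) = kappa.

Definition ext_eq (f g : field) : Prop := forall k, f k = g k.

(** 2x2 real matrices (a,b,c,d) = [[a,b],[c,d]] *)
Definition mat2 := (R * R * R * R)%type.
Definition orth (g : mat2) : Prop :=
  let '(a, b, c, d) := g in
  a * a + c * c = 1 /\ b * b + d * d = 1 /\ a * b + c * d = 0.
Definition mat_app (g : mat2) (k : pt) : pt :=
  let '(a, b, c, d) := g in (a * fst k + b * snd k, c * fst k + d * snd k).
Definition mat_tr (g : mat2) : mat2 := let '(a, b, c, d) := g in (a, c, b, d).

(** (gamma a)(k) = a(gamma^{-1} k), gamma in O(2) (gamma^{-1} = gamma^T) *)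
Definition orth_act (g : mat2) (f : field) : field :=
  fun k => f (mat_app (mat_tr g) k).

Definition rot_mat (theta : R) : mat2 := (cos theta, - sin theta, sin theta, cos theta).
Definition rot_act (theta : R) (f : field) : field := orth_act (rot_mat theta) f.

Definition cexp_mi (phi : R) : C := (cos phi, - sin phi).
Definition trans_act (s t : R) (f : field) : field :=
  fun k => Cmult (cexp_mi (s * fst k + t * snd k)) (f k).

Definition gamma1 : mat2 := (-1, 0, 0, 1).
Definition gamma2 : mat2 := (0, 1, 1, 0).

(** C^6 is represented by nat -> C, only coordinates 0..5 being used:
    z_1 = v 0, z_2 = v 1, w_1 = v 2, ..., w_4 = v 5. *)
Definition C6 := nat -> C.

Definition wave (l1 l2 n2 : R) (i : nat) : pt :=
  match i with
  | 0 => (l1, 0)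
  | 1 => (0, l1)
  | 2 => (l2, n2)
  | 3 => (l2, - n2)
  | 4 => (n2, l2)
  | _ => (n2, - l2)
  end.

(** the element a of E^c with a(q_i)=z_i, a(p_j)=w_j, a(-k)=conj a(k),
    a = 0 off tilde A *)
Definition emb (l1 l2 n2 : R) (v : C6) : field := fun k =>
  fold_right (fun i acc =>
      if pt_eqb k (wave l1 l2 n2 i) then v i
      else if pt_eqb k (pt_opp (wave l1 l2 n2 i)) then Cconj (v i)
      else acc)
    (RtoC 0) [0; 1; 2; 3; 4; 5]%nat.

Definition cvar (v : C6) (j : nat) : C :=
  if Nat.ltb j 6 then v j else Cconj (v (j - 6)%nat).
Definition mono_eval (v : C6) (m : list nat) : C :=
  fold_right Cmult (RtoC 1) (map (cvar v) m).
Definition hom_poly_C6 (p : nat) (f : C6 -> C) : Prop :=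
  exists terms : list (C * list nat),
    (forall c m, In (c, m) terms -> length m = p /\ forall j, In j m -> (j < 12)%nat) /\
    forall v, f v = fold_right Cplus (RtoC 0)
                      (map (fun cm => Cmult (fst cm) (mono_eval v (snd cm))) terms).
Definition hom_poly_field_C6 (p : nat) (F : C6 -> C6) : Prop :=
  forall i, (i < 6)%nat -> hom_poly_C6 p (fun v => F v i).

(** equivariance of F~ w.r.t. the action of a transformation preserving E^c,
    transported to C^6 through the identification emb *)
Definition equivariant_Ec (l1 l2 n2 : R) (act : field -> field) (F : C6 -> C6) : Prop :=
  forall v v', ext_eq (emb l1 l2 n2 v') (act (emb l1 l2 n2 v)) ->
    ext_eq (emb l1 l2 n2 (F v')) (act (emb l1 l2 n2 (F v))).

Definition Gamma_equivariant (l1 l2 n2 : R) (F : C6 -> C6) : Prop :=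
  equivariant_Ec l1 l2 n2 (orth_act gamma1) F /\
  equivariant_Ec l1 l2 n2 (orth_act gamma2) F /\
  (forall s t, equivariant_Ec l1 l2 n2 (trans_act s t) F).

Fixpoint tuples {A : Type} (l : list A) (p : nat) : list (list A) :=
  match p with
  | O => [[]]
  | S p' => flat_map (fun x => map (cons x) (tuples l p')) l
  end.

(** l is a duplicate-free list of points of A(kappa) containing the support of a
    (so a is a finitely supported element of E_kappa) *)
Definition supp_list (kappa : R) (a : field) (l : list pt) : Prop :=
  NoDup l /\ (forall k, In k l -> on_circle kappa k) /\
  (forall k, a k <> RtoC 0 -> In k l).

Definition E2_poly_field (kappa : R) (p : nat) (F : field -> field) : Prop :=
  (exists P : pt -> list pt -> C,
     forall a l, supp_list kappa a l -> forall k, on_circle kappa k ->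
       F a k = fold_right Cplus (RtoC 0)
                 (map (fun ks => Cmult (P k ks) (fold_right Cmult (RtoC 1) (map a ks)))
                      (tuples l p))) /\
  (forall g a l, orth g -> supp_list kappa a l -> forall k, on_circle kappa k ->
       F (orth_act g a) k = orth_act g (F a) k) /\
  (forall s t a l, supp_list kappa a l -> forall k, on_circle kappa k ->
       F (trans_act s t a) k = trans_act s t (F a) k).

(* Main.v *)
Require Import Defs.
From Stdlib Require Import Reals List Permutation Lra Lia ClassicalEpsilon FunctionalExtensionality.
From Coquelicot Require Import Coquelicot.
Import ListNotations.
Open Scope R_scope.

Definition sumC (l : list C) : C := fold_right Cplus (RtoC 0) l.
Definition prodC (l : list C) : C := fold_right Cmult (RtoC 1) l.
Definition ind (P : Prop) : C := if excluded_middle_informative P then RtoC 1 else RtoC 0.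

Lemma sumC_app l1 l2 : sumC (l1 ++ l2) = Cplus (sumC l1) (sumC l2).
Proof. induction l1; simpl. ring. unfold sumC in *; simpl. rewrite IHl1. ring. Qed.
Lemma prodC_app l1 l2 : prodC (l1 ++ l2) = Cmult (prodC l1) (prodC l2).
Proof. induction l1; simpl. unfold prodC; simpl; ring. unfold prodC in *; simpl. rewrite IHl1. ring. Qed.

Lemma sumC_plus {A} (f g : A -> C) l :
  sumC (map (fun x => Cplus (f x) (g x)) l) = Cplus (sumC (map f l)) (sumC (map g l)).
Proof. induction l; unfold sumC in *; simpl. ring. rewrite IHl. ring. Qed.
Lemma sumC_scal {A} (c : C) (f : A -> C) l :
  sumC (map (fun x => Cmult c (f x)) l) = Cmult c (sumC (map f l)).
Proof. induction l; unfold sumC in *; simpl. ring. rewrite IHl. ring. Qed.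
Lemma sumC_ext {A} (f g : A -> C) l : (forall x, In x l -> f x = g x) ->
  sumC (map f l) = sumC (map g l).
Proof. intros H; induction l; simpl; auto. unfold sumC in *; simpl. rewrite H by (left; auto).
  rewrite IHl; auto. intros; apply H; right; auto. Qed.
Lemma prodC_ext {A} (f g : A -> C) l : (forall x, In x l -> f x = g x) ->
  prodC (map f l) = prodC (map g l).
Proof. intros H; induction l; simpl; auto. unfold prodC in *; simpl. rewrite H by (left; auto).
  rewrite IHl; auto. intros; apply H; right; auto. Qed.
Lemma sumC_zero {A} (f : A -> C) l : (forall x, In x l -> f x = RtoC 0) -> sumC (map f l) = RtoC 0.
Proof. intros H; induction l; simpl; auto. unfold sumC in *; simpl. rewrite H by (left; auto).
  rewrite IHl; [ring|]. intros; apply H; right; auto. Qed.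
Lemma prodC_mult {A} (f g : A -> C) l :
  prodC (map (fun x => Cmult (f x) (g x)) l) = Cmult (prodC (map f l)) (prodC (map g l)).
Proof. induction l; unfold prodC in *; simpl. ring. rewrite IHl. ring. Qed.
Lemma sumC_flat_map {A B} (f : B -> C) (g : A -> list B) l :
  sumC (map f (flat_map g l)) = sumC (map (fun x => sumC (map f (g x))) l).
Proof. induction l; simpl; auto. rewrite map_app, sumC_app, IHl. reflexivity. Qed.
Lemma sumC_swap {A B} (f : A -> B -> C) l1 l2 :
  sumC (map (fun x => sumC (map (fun y => f x y) l2)) l1) =
  sumC (map (fun y => sumC (map (fun x => f x y) l1)) l2).
Proof. induction l1; simpl.
  - symmetry; apply sumC_zero; auto.
  - unfold sumC at 1; simpl; fold sumC. rewrite IHl1. rewrite <- sumC_plus. reflexivity. Qed.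
Lemma sumC_perm (l l' : list C) : Permutation l l' -> sumC l = sumC l'.
Proof. induction 1; unfold sumC in *; simpl; auto. rewrite IHPermutation; auto. ring. congruence. Qed.
Lemma prodC_perm (l l' : list C) : Permutation l l' -> prodC l = prodC l'.
Proof. induction 1; unfold prodC in *; simpl; auto. rewrite IHPermutation; auto. ring. congruence. Qed.

Lemma ind_true (P : Prop) : P -> ind P = RtoC 1.
Proof. intros; unfold ind; destruct excluded_middle_informative; tauto. Qed.
Lemma ind_false (P : Prop) : ~ P -> ind P = RtoC 0.
Proof. intros; unfold ind; destruct excluded_middle_informative; tauto. Qed.
Lemma ind_iff P Q : (P <-> Q) -> ind P = ind Q.
Proof. intros; unfold ind; do 2 destruct excluded_middle_informative; tauto. Qed.
Lemma ind_and P Q : ind (P /\ Q) = Cmult (ind P) (ind Q).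
Proof. unfold ind; repeat destruct excluded_middle_informative; try tauto; ring. Qed.
Lemma ind_not P : ind (~ P) = Cminus (RtoC 1) (ind P).
Proof. unfold ind; repeat destruct excluded_middle_informative; try tauto; ring. Qed.
Lemma prodC_ind {A} (R : A -> Prop) l :
  prodC (map (fun x => ind (R x)) l) = ind (forall x, In x l -> R x).
Proof. induction l; simpl.
  - symmetry; apply ind_true; simpl; tauto.
  - unfold prodC in *; simpl. rewrite IHl, <- ind_and. apply ind_iff. simpl; firstorder congruence. Qed.

Lemma In_tuples {A} (l : list A) p ks : In ks (tuples l p) <-> length ks = p /\ forall x, In x ks -> In x l.
Proof. revert ks; induction p; intros ks; simpl.
  - split. intros [<-|[]]; simpl; tauto. intros [H _]; destruct ks; simpl in *; try lia; auto.
  - rewrite in_flat_map. split.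
    + intros [x [Hx Hin]]. apply in_map_iff in Hin. destruct Hin as [ks' [<- Hk]].
      apply IHp in Hk. simpl. destruct Hk; split; [lia|]. intros y [<-|Hy]; auto.
    + intros [Hl Hin]. destruct ks as [|x ks']; simpl in Hl; [lia|]. exists x. split. apply Hin; left; auto.
      apply in_map. apply IHp. split. lia. intros; apply Hin; right; auto. Qed.

Lemma NoDup_fm {A} (T : list (list A)) l : NoDup l -> NoDup T ->
  NoDup (flat_map (fun x => map (cons x) T) l).
Proof. intros Hl HT; induction Hl; simpl. constructor. apply NoDup_app.
  - apply FinFun.Injective_map_NoDup; auto. intros a b H'; injection H'; auto.
  - auto.
  - intros ks H1 H2. apply in_map_iff in H1. destruct H1 as [k1 [<- _]].
    apply in_flat_map in H2. destruct H2 as [y [Hy H3]]. apply in_map_iff in H3.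
    destruct H3 as [k2 [E _]]. injection E; intros; subst; auto. Qed.
Lemma NoDup_tuples {A} (l : list A) p : NoDup l -> NoDup (tuples l p).
Proof. intros Hl; induction p; simpl. constructor; auto; constructor.
  apply NoDup_fm; auto. Qed.

Lemma fm_map {A B} (g : A -> B) (T : list (list A)) l :
  flat_map (fun x => map (cons x) (map (map g) T)) (map g l) =
  map (map g) (flat_map (fun x => map (cons x) T) l).
Proof. induction l; simpl; auto. rewrite IHl, map_app, !map_map. reflexivity. Qed.
Lemma tuples_map {A B} (g : A -> B) l p : tuples (map g l) p = map (map g) (tuples l p).
Proof. induction p; simpl; auto. rewrite IHp. apply fm_map. Qed.

Definition pz {A B} (x : A -> B -> C) (ts : list A) (phi : list B) : C :=
  prodC (map (fun tj => x (fst tj) (snd tj)) (combine ts phi)).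

Lemma sumC_scal_r {A} (c : C) (f : A -> C) l :
  sumC (map (fun x => Cmult (f x) c) l) = Cmult (sumC (map f l)) c.
Proof. induction l; unfold sumC in *; simpl. ring. rewrite IHl. ring. Qed.

Lemma prod_sum {A B} (x : A -> B -> C) (J : list B) (ts : list A) :
  prodC (map (fun t => sumC (map (x t) J)) ts) = sumC (map (pz x ts) (tuples J (length ts))).
Proof. induction ts; simpl.
  - unfold sumC, prodC, pz; simpl; ring.
  - change (fold_right Cmult 1 (map (fun t => sumC (map (x t) J)) ts)) with
      (prodC (map (fun t => sumC (map (x t) J)) ts)).
    rewrite IHts, sumC_flat_map, <- sumC_scal_r. apply sumC_ext; intros j _.
    rewrite map_map, <- sumC_scal. apply sumC_ext; intros ks _. reflexivity. Qed.

Lemma pz_mult {A B} (x y : A -> B -> C) ts phi :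
  pz (fun t j => Cmult (x t j) (y t j)) ts phi = Cmult (pz x ts phi) (pz y ts phi).
Proof. unfold pz. rewrite <- prodC_mult. reflexivity. Qed.

Lemma pz_right {A B} (f : B -> C) (ts : list A) phi : length ts = length phi ->
  pz (fun _ j => f j) ts phi = prodC (map f phi).
Proof. revert phi; induction ts; intros [|j phi] H; simpl in *; try lia; auto.
  unfold pz, prodC in *; simpl. f_equal. apply IHts; lia. Qed.
Lemma pz_left {A B} (f : A -> C) (ts : list A) (phi : list B) : length ts = length phi ->
  pz (fun t _ => f t) ts phi = prodC (map f ts).
Proof. revert phi; induction ts; intros [|j phi] H; simpl in *; try lia; auto.
  unfold pz, prodC in *; simpl. f_equal. apply IHts; lia. Qed.

Definition BB : list bool := [false; true].
Definition sgn (s : list bool) : C := prodC (map (fun b : bool => if b then RtoC 1 else RtoC (-1)) s).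
Definition phi' (phi : list nat) := map pred (filter (fun a => negb (Nat.eqb a 0)) phi).

Lemma phi'_in phi a : In a (phi' phi) <-> In (S a) phi.
Proof. unfold phi'. rewrite in_map_iff. split.
  - intros [x [<- Hx]]. apply filter_In in Hx. destruct Hx as [Hx H0].
    destruct x; simpl in *; [discriminate|auto].
  - intros H. exists (S a); split; auto. apply filter_In; split; auto. Qed.

Lemma inner n : forall phi, (forall a, In a phi -> (a < n)%nat) ->
  sumC (map (fun s => Cmult (sgn s) (ind (forall a, In a phi -> nth a s false = true))) (tuples BB n))
  = ind (forall j, (j < n)%nat -> In j phi).
Proof. induction n; intros phi Hphi.
  - simpl. unfold sumC, sgn, prodC; simpl. rewrite !ind_true. ring.
    intros j Hj; lia. intros a Ha; specialize (Hphi a Ha); lia.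
  - simpl tuples. rewrite app_nil_r, map_app, sumC_app, !map_map.
    assert (Hp' : forall a, In a (phi' phi) -> (a < n)%nat).
    { intros a Ha. apply phi'_in in Ha. apply Hphi in Ha. lia. }
    assert (E : forall b s, ind (forall a, In a phi -> nth a (b :: s) false = true) =
      Cmult (ind (In 0%nat phi -> b = true)) (ind (forall a, In a (phi' phi) -> nth a s false = true))).
    { intros b s. rewrite <- ind_and. apply ind_iff. split.
      - intros H. split. intros H0; apply (H 0%nat H0). intros a Ha. apply phi'_in in Ha.
        apply (H (S a) Ha).
      - intros [H1 H2] a Ha. destruct a. simpl; auto. simpl. apply H2, phi'_in; auto. }
    erewrite (sumC_ext (fun x => Cmult (sgn (false :: x)) _) (fun s => Cmult (RtoC (-1) * ind (~ In 0%nat phi))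
        (Cmult (sgn s) (ind (forall a, In a (phi' phi) -> nth a s false = true))))).
    2:{ intros s _. rewrite E. unfold sgn, prodC; simpl. rewrite (ind_iff (In 0%nat phi -> false = true) (~ In 0%nat phi)).
        ring. split; intros H H'; [discriminate (H H')|contradiction]. }
    erewrite (sumC_ext (fun x => Cmult (sgn (true :: x)) _) (fun s => Cmult (RtoC 1)
        (Cmult (sgn s) (ind (forall a, In a (phi' phi) -> nth a s false = true))))).
    2:{ intros s _. rewrite E. unfold sgn, prodC; simpl. rewrite (ind_true (In 0%nat phi -> true = true)).
        ring. auto. }
    rewrite !sumC_scal, IHn by auto.
    rewrite ind_not.
    assert (ind (forall j, (j < S n)%nat -> In j phi) = Cmult (ind (In 0%nat phi)) (ind (forall j, (j < n)%nat -> In j (phi' phi)))).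
    { rewrite <- ind_and. apply ind_iff. split.
      - intros H; split. apply H; lia. intros j Hj. apply phi'_in, H; lia.
      - intros [H1 H2] j Hj. destruct j; auto. apply phi'_in, H2; lia. }
    rewrite H. ring. Qed.

(* Y2 : inclusion-exclusion *)
Lemma Y2 {A} (n : nat) (qs : list A) (x : A -> nat -> C) :
  sumC (map (fun s => Cmult (sgn s) (prodC (map (fun q => sumC (map (fun j =>
      Cmult (ind (nth j s false = true)) (x q j)) (seq 0 n))) qs))) (tuples BB n))
  = sumC (map (fun phi => Cmult (ind (forall j, (j < n)%nat -> In j phi)) (pz x qs phi))
      (tuples (seq 0 n) (length qs))).
Proof.
  erewrite sumC_ext.
  2:{ intros s _. rewrite (prod_sum (fun q j => Cmult (ind (nth j s false = true)) (x q j))).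
      rewrite <- sumC_scal. reflexivity. }
  rewrite sumC_swap. apply sumC_ext. intros phi Hphi.
  apply In_tuples in Hphi. destruct Hphi as [Hl Hin].
  rewrite (sumC_ext _ (fun s => Cmult (Cmult (sgn s) (ind (forall a, In a phi -> nth a s false = true))) (pz x qs phi))).
  2:{ intros s _. rewrite pz_mult, pz_right by auto. rewrite prodC_ind. ring. }
  rewrite sumC_scal_r. rewrite inner. ring.
  intros a Ha. apply Hin in Ha. apply in_seq in Ha. lia. Qed.

Lemma nth_map_lt {X Y} (f : X -> Y) l j d d' : (j < length l)%nat -> nth j (map f l) d' = f (nth j l d).
Proof. intros H. rewrite (nth_indep _ d' (f d)) by (rewrite length_map; auto). apply map_nth. Qed.

Lemma map_nth_seq {X} (l : list X) d : map (fun j => nth j l d) (seq 0 (length l)) = l.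
Proof. apply (nth_ext _ _ d d). rewrite length_map, length_seq; auto.
  intros j Hj. rewrite length_map, length_seq in Hj. rewrite (nth_map_lt _ _ _ 0%nat) by (rewrite length_seq; auto).
  rewrite seq_nth; auto. Qed.

Definition surj (n : nat) (phi : list nat) := forall j, (j < n)%nat -> In j phi.

Lemma surj_perm n phi : In phi (tuples (seq 0 n) n) -> surj n phi -> Permutation phi (seq 0 n).
Proof. intros Hp Hs. apply In_tuples in Hp. destruct Hp as [Hl Hin].
  assert (ND : NoDup phi).
  { apply NoDup_incl_NoDup with (l := seq 0 n). apply seq_NoDup. rewrite length_seq; lia.
    intros j Hj. apply in_seq in Hj. apply Hs; lia. }
  apply NoDup_Permutation; auto. apply seq_NoDup. intros j; split; intros Hj.
  apply Hin; auto. apply in_seq in Hj; apply Hs; lia. Qed.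

Lemma surj_nodup n phi : In phi (tuples (seq 0 n) n) -> surj n phi -> NoDup phi.
Proof. intros Hp Hs. eapply Permutation_NoDup. symmetry; apply surj_perm; eauto. apply seq_NoDup. Qed.

Lemma sumC_cons y l : sumC (y :: l) = Cplus y (sumC l).
Proof. reflexivity. Qed.

Lemma sum_ind_unique {X} (R : X -> Prop) (L : list X) r : NoDup L -> In r L -> R r ->
  (forall y, In y L -> R y -> y = r) -> sumC (map (fun y => ind (R y)) L) = RtoC 1.
Proof. intros ND; induction ND; intros Hr HR Hu; simpl in Hr. contradiction.
  rewrite map_cons, sumC_cons. destruct Hr as [<-|Hr].
  - rewrite ind_true by auto. rewrite sumC_zero. ring. intros y Hy. apply ind_false. intros Ry.
    assert (y = x) by (apply Hu; [right; auto | auto]). subst; contradiction.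
  - rewrite ind_false. rewrite IHND; [ring|auto|auto|intros; apply Hu; [right; auto| auto]]. intros Rx. assert (x = r) by (apply Hu; [left; auto | auto]).
    subst; contradiction. Qed.

Lemma pz_ext {X Y} (x y : X -> Y -> C) ts phi : (forall t j, x t j = y t j) -> pz x ts phi = pz y ts phi.
Proof. intros H; unfold pz. apply prodC_ext. intros; apply H. Qed.

Section Delta.
Variable (l : list pt) (a : pt -> C) (qs : list pt) (phi : list nat) (d : pt).
Hypothesis (Hl : NoDup l) (Hqs : forall q, In q qs -> In q l).
Let n := length qs.
Hypothesis (Hphi : In phi (tuples (seq 0 n) n)) (Hs : surj n phi).

Definition tj (j : nat) : nat := epsilon (inhabits 0%nat) (fun t => (t < n)%nat /\ nth t phi 0%nat = j).
Definition rr : list pt := map (fun j => nth (tj j) qs d) (seq 0 n).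

Lemma tj_spec j : (j < n)%nat -> (tj j < n)%nat /\ nth (tj j) phi 0%nat = j.
Proof. intros Hj. unfold tj. apply epsilon_spec. apply Hs in Hj.
  apply In_tuples in Hphi. destruct Hphi as [Hlen _].
  destruct (In_nth _ _ 0%nat Hj) as [t [Ht E]]. exists t; split; auto; lia. Qed.

Lemma phi_props : length phi = n /\ NoDup phi /\ (forall j, In j phi -> (j < n)%nat).
Proof. pose proof Hphi as H. apply In_tuples in H. destruct H as [H1 H2]. split; auto. split.
  eapply surj_nodup; eauto. intros j Hj. apply H2 in Hj. apply in_seq in Hj; lia. Qed.

Lemma combine_in_inv q j : In (q, j) (combine qs phi) ->
  exists t, (t < n)%nat /\ q = nth t qs d /\ j = nth t phi 0%nat.
Proof. intros H. destruct phi_props as [Hlen _].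
  destruct (In_nth _ _ (d, 0%nat) H) as [t [Ht E]]. rewrite length_combine in Ht.
  rewrite combine_nth in E by (fold n; lia). injection E; intros; subst. exists t.
  split; [unfold n in *; lia| auto]. Qed.

Lemma combine_in t : (t < n)%nat -> In (nth t qs d, nth t phi 0%nat) (combine qs phi).
Proof. intros Ht. destruct phi_props as [Hlen _]. rewrite <- combine_nth by (fold n; lia).
  apply nth_In. rewrite length_combine. unfold n in *; lia. Qed.

Definition Rk (ks : list pt) := forall tjp, In tjp (combine qs phi) -> nth (snd tjp) ks d = fst tjp.

Lemma rr_nth j : (j < n)%nat -> nth j rr d = nth (tj j) qs d.
Proof. intros Hj. unfold rr. rewrite (nth_map_lt _ _ _ 0%nat) by (rewrite length_seq; auto).
  rewrite seq_nth; auto. Qed.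

Lemma rr_R : Rk rr.
Proof. intros [q j] H. simpl. destruct (combine_in_inv q j H) as [t [Ht [-> ->]]].
  destruct phi_props as [Hlen [ND Hlt]].
  assert (Hj : (nth t phi 0%nat < n)%nat). { apply Hlt, nth_In; lia. }
  rewrite rr_nth by auto. destruct (tj_spec _ Hj) as [H1 H2].
  f_equal. apply (NoDup_nth phi 0%nat) in H2; auto; lia. Qed.

Lemma rr_in : In rr (tuples l n).
Proof. apply In_tuples. split. unfold rr; rewrite length_map, length_seq; auto.
  intros x Hx. unfold rr in Hx. apply in_map_iff in Hx. destruct Hx as [j [<- Hj]].
  apply in_seq in Hj. apply Hqs, nth_In. destruct (tj_spec j) as [H1 _]; [lia|]. auto. Qed.

Lemma rr_unique ks : In ks (tuples l n) -> Rk ks -> ks = rr.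
Proof. intros Hk HR. apply In_tuples in Hk. destruct Hk as [Hlen _].
  apply (nth_ext _ _ d d). unfold rr; rewrite length_map, length_seq; auto.
  intros j Hj. rewrite Hlen in Hj. pose proof (Hs j Hj) as Hin.
  destruct phi_props as [Hlp _].
  destruct (In_nth _ _ 0%nat Hin) as [t [Ht E]].
  pose proof (combine_in t ltac:(lia)) as Hc. rewrite E in Hc.
  pose proof (HR _ Hc) as E1; pose proof (rr_R _ Hc) as E2; simpl in E1, E2. congruence. Qed.

Lemma delta_sum :
  sumC (map (fun ks => Cmult (prodC (map a ks)) (pz (fun q j => ind (nth j ks d = q)) qs phi)) (tuples l n))
  = prodC (map a qs).
Proof.
  destruct phi_props as [Hlp [ND Hlt]].
  rewrite (sumC_ext _ (fun ks => Cmult (prodC (map a qs)) (ind (Rk ks)))).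
  - rewrite sumC_scal. rewrite (sum_ind_unique _ _ rr). ring. apply NoDup_tuples; auto.
    apply rr_in. apply rr_R. apply rr_unique.
  - intros ks Hk. pose proof Hk as Hk'. apply In_tuples in Hk'. destruct Hk' as [Hlen _].
    rewrite <- (map_nth_seq ks d) at 1. rewrite map_map. rewrite Hlen.
    rewrite <- (prodC_perm _ _ (Permutation_map _ (surj_perm _ _ Hphi Hs))).
    rewrite <- (pz_right (fun j => a (nth j ks d)) qs) by lia.
    rewrite <- pz_mult.
    rewrite (pz_ext _ (fun q j => Cmult (a q) (ind (nth j ks d = q)))).
    2:{ intros q j. unfold ind. destruct excluded_middle_informative. rewrite e; auto. ring. }
    rewrite pz_mult, pz_left by lia. f_equal. unfold pz. rewrite prodC_ind. reflexivity. Qed.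
End Delta.

Definition evP (terms : list (C * list pt)) (b : pt -> C) : C :=
  sumC (map (fun cq => Cmult (fst cq) (prodC (map b (snd cq)))) terms).
Definition slice (b : pt -> C) := forall x, b (pt_opp x) = Cconj (b x).
Definition suppZ (Z : list pt) (b : pt -> C) := forall x, b x <> RtoC 0 -> In x Z.
Definition symmZ (Z : list pt) := forall x, In x Z -> In (pt_opp x) Z.

Lemma pt_opp_opp x : pt_opp (pt_opp x) = x.
Proof. destruct x; unfold pt_opp; simpl; f_equal; ring. Qed.

Fixpoint peval (P : list C) (t : C) : C :=
  match P with [] => RtoC 0 | c :: P' => Cplus c (Cmult t (peval P' t)) end.
Fixpoint polyadd (P Q : list C) : list C :=
  match P, Q with [], _ => Q | _, [] => P | a :: P', b :: Q' => Cplus a b :: polyadd P' Q' end.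
Fixpoint pmul (P Q : list C) : list C :=
  match P with [] => [] | c :: P' => polyadd (map (Cmult c) Q) (RtoC 0 :: pmul P' Q) end.

Lemma peval_add P Q t : peval (polyadd P Q) t = Cplus (peval P t) (peval Q t).
Proof. revert Q; induction P; intros [|b Q]; simpl; try ring. rewrite IHP; ring. Qed.
Lemma peval_scale c Q t : peval (map (Cmult c) Q) t = Cmult c (peval Q t).
Proof. induction Q; simpl. ring. rewrite IHQ; ring. Qed.
Lemma peval_mul P Q t : peval (pmul P Q) t = Cmult (peval P t) (peval Q t).
Proof. induction P; simpl. ring. rewrite peval_add, peval_scale. simpl. rewrite IHP. ring. Qed.

Lemma poly_prod (y z : pt -> C) qs : exists P, forall t,
  prodC (map (fun x => Cplus (y x) (Cmult t (z x))) qs) = peval P t.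
Proof. induction qs as [|q qs IH].
  - exists [RtoC 1]. intros t; unfold prodC; simpl; ring.
  - destruct IH as [P HP]. exists (pmul [y q; z q] P). intros t.
    rewrite peval_mul. unfold prodC in *; simpl. rewrite HP. ring. Qed.

Lemma poly_evP (y z : pt -> C) terms : exists P, forall t,
  evP terms (fun x => Cplus (y x) (Cmult t (z x))) = peval P t.
Proof. induction terms as [|[c qs] terms IH].
  - exists []. intros; reflexivity.
  - destruct IH as [P HP]. destruct (poly_prod y z qs) as [Q HQ].
    exists (polyadd (map (Cmult c) Q) P). intros t. rewrite peval_add, peval_scale.
    unfold evP in *; simpl. unfold sumC at 1; simpl; fold sumC. rewrite HP, HQ. reflexivity. Qed.

Definition sumR (l : list R) := fold_right Rplus 0 l.

Lemma peval_bound P t : Cmod t <= 1 -> Cmod (peval P t) <= sumR (map Cmod P).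
Proof. intros Ht; induction P; simpl. rewrite Cmod_0; lra.
  eapply Rle_trans. apply Cmod_triangle. rewrite Cmod_mult.
  assert (0 <= Cmod (peval P t)) by apply Cmod_ge_0. assert (0 <= Cmod t) by apply Cmod_ge_0.
  nra. Qed.

Lemma sumR_ge0 P : 0 <= sumR (map Cmod P).
Proof. induction P; simpl; [lra|]. pose proof (Cmod_ge_0 a); lra. Qed.

Lemma peval_vanish P : (forall r : R, 0 < r <= 1 -> peval P (RtoC r) = RtoC 0) ->
  forall t, peval P t = RtoC 0.
Proof. induction P as [|c P IH]; intros H t; simpl; auto.
  assert (Hc : c = RtoC 0).
  { apply Cmod_eq_0. set (M := sumR (map Cmod P)). pose proof (sumR_ge0 P) as HM. fold M in HM.
    assert (Hb : forall r, 0 < r <= 1 -> Cmod c <= r * M).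
    { intros r Hr. specialize (H r Hr). simpl in H.
      assert (c = Copp (Cmult (RtoC r) (peval P r))) as ->.
      { transitivity (Cminus (Cplus c (Cmult (RtoC r) (peval P r))) (Cmult (RtoC r) (peval P r))).
        ring. rewrite H. ring. }
      rewrite Cmod_opp, Cmod_mult, Cmod_R, Rabs_pos_eq by lra.
      apply Rmult_le_compat_l; [lra|]. apply peval_bound. rewrite Cmod_R, Rabs_pos_eq; lra. }
    pose proof (Cmod_ge_0 c).
    destruct (Req_dec (Cmod c) 0) as [E|E]; auto. exfalso.
    set (r := Rmin 1 (Cmod c / (2 * (M + 1)))).
    assert (0 < r <= 1).
    { unfold r. split. apply Rmin_glb_lt. lra. apply Rdiv_lt_0_compat; lra. apply Rmin_l. }
    specialize (Hb r H1).
    assert (r <= Cmod c / (2 * (M+1))) by apply Rmin_r.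
    assert (r * M <= Cmod c / (2 * (M+1)) * M) by (apply Rmult_le_compat_r; lra).
    assert (Cmod c / (2 * (M+1)) * M < Cmod c).
    { assert (E1 : Cmod c / (2*(M+1)) * M = Cmod c * (M / (2*(M+1)))) by (field; lra).
      assert (E2 : M / (2*(M+1)) < 1).
      { unfold Rdiv; apply Rmult_lt_reg_r with (2*(M+1)); [lra|].
        rewrite Rmult_assoc, Rinv_l by lra. lra. }
      rewrite E1. nra. }
    lra. }
  subst c. rewrite (IH). ring. intros r Hr. specialize (H r Hr). simpl in H.
  assert (RtoC r <> RtoC 0). { intro E; injection E; lra. }
  replace (peval P r) with (Cmult (Cinv (RtoC r)) (Cplus (RtoC 0) (Cmult (RtoC r) (peval P r)))) by (field; auto).
  rewrite H. ring. Qed.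

Lemma Cconj_R r : Cconj (RtoC r) = RtoC r.
Proof. unfold Cconj, RtoC; simpl; f_equal; ring. Qed.
Lemma Cconj_Ci : Cconj Ci = Copp Ci.
Proof. unfold Cconj, Ci, Copp; simpl; f_equal; ring. Qed.

Lemma Y5 terms Z : symmZ Z -> (forall b, slice b -> suppZ Z b -> evP terms b = RtoC 0) ->
  forall b, suppZ Z b -> evP terms b = RtoC 0.
Proof. intros HZ H b Hb.
  set (y := fun x => Cmult (Cplus (b x) (Cconj (b (pt_opp x)))) (RtoC (/2))).
  set (z := fun x => Cmult (Cminus (b x) (Cconj (b (pt_opp x)))) (Cmult (RtoC (-/2)) Ci)).
  destruct (poly_evP y z terms) as [P HP].
  assert (E : (fun x => Cplus (y x) (Cmult Ci (z x))) = b).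
  { apply functional_extensionality; intros x. unfold y, z. apply injective_projections; simpl; field. }
  rewrite <- E, HP. apply peval_vanish. intros r Hr. rewrite <- HP. apply H.
  - intros x. unfold y, z. rewrite pt_opp_opp.
    repeat (rewrite ?Cplus_conj, ?Cmult_conj, ?Cminus_conj, ?Cconj_conj, ?Cconj_R, ?Cconj_Ci).
    ring.
  - intros x Hx. destruct (classic (b x = RtoC 0 /\ b (pt_opp x) = RtoC 0)) as [[E1 E2]|NE].
    + exfalso; apply Hx. unfold y, z. rewrite E1, E2. unfold Cconj; simpl.
      apply injective_projections; simpl; ring.
    + apply not_and_or in NE. destruct NE as [NE|NE]. apply Hb; auto.
      rewrite <- (pt_opp_opp x). apply HZ, Hb; auto. Qed.

Lemma pt_eqb_eq a b : a = b -> pt_eqb a b = true.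
Proof. intros ->; unfold pt_eqb; destruct (Req_EM_T _ _); [destruct (Req_EM_T _ _)|]; tauto. Qed.
Lemma pt_eqb_neq a b : a <> b -> pt_eqb a b = false.
Proof. intros H; unfold pt_eqb; destruct (Req_EM_T _ _); [destruct (Req_EM_T _ _)|]; auto.
  exfalso; apply H; destruct a, b; simpl in *; subst; auto. Qed.

Definition dot (x y : pt) := fst x * fst y + snd x * snd y.
Definition mat_mul (A B : mat2) : mat2 :=
  let '(a, b, c, d) := A in let '(a', b', c', d') := B in
  (a * a' + b * c', a * b' + b * d', c * a' + d * c', c * b' + d * d').
Lemma mat_app_mul A B x : mat_app (mat_mul A B) x = mat_app A (mat_app B x).
Proof. destruct A as [[[a b] c] d], B as [[[a' b'] c'] d'], x; simpl; f_equal; ring. Qed.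

Lemma orth_dot g : orth g <-> forall x y, dot (mat_app g x) (mat_app g y) = dot x y.
Proof. destruct g as [[[a b] c] d]; unfold orth, dot; simpl. split.
  - intros [H1 [H2 H3]] [x1 x2] [y1 y2]; simpl.
    transitivity ((a*a+c*c) * x1 * y1 + (a*b+c*d) * (x1*y2 + x2*y1) + (b*b+d*d) * x2 * y2). ring.
    rewrite H1, H2, H3. ring.
  - intros H. pose proof (H (1,0) (1,0)) as E1. pose proof (H (0,1) (0,1)) as E2.
    pose proof (H (1,0) (0,1)) as E3. simpl in *. repeat split; nra. Qed.

Lemma orth_mul g h : orth g -> orth h -> orth (mat_mul g h).
Proof. rewrite !orth_dot. intros Hg Hh x y. rewrite !mat_app_mul, Hg, Hh. auto. Qed.

Lemma orth_form a b c d : orth (a, b, c, d) ->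
  a * a + c * c = 1 /\ exists D, D * D = 1 /\ b = - (c * D) /\ d = a * D.
Proof. unfold orth; intros [H1 [H2 H3]]. split; auto. exists (a * d - b * c). split.
  - transitivity ((a*a+c*c)*(b*b+d*d) - (a*b+c*d)*(a*b+c*d)). ring. rewrite H1, H2, H3; ring.
  - split.
    + replace b with (b * (a*a+c*c)) at 1 by (rewrite H1; ring).
      transitivity (-(c*(a*d-b*c)) + a*(a*b+c*d)). ring. rewrite H3; ring.
    + replace d with (d * (a*a+c*c)) at 1 by (rewrite H1; ring).
      transitivity (a*(a*d-b*c) + c*(a*b+c*d)). ring. rewrite H3; ring. Qed.

Lemma orth_tr g : orth g -> orth (mat_tr g).
Proof. destruct g as [[[a b] c] d]. intros H. apply orth_form in H. destruct H as [H1 [D [HD [-> ->]]]].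
  unfold orth; simpl. repeat split.
  - transitivity (a*a + c*c*(D*D)). ring. rewrite HD; lra.
  - transitivity (c*c + a*a*(D*D)). ring. rewrite HD; lra.
  - transitivity (a*c*(1 - D*D)). ring. rewrite HD; ring. Qed.

Lemma orth_inv1 g x : orth g -> mat_app (mat_tr g) (mat_app g x) = x.
Proof. destruct g as [[[a b] c] d], x as [x y]. intros H. unfold orth in H. simpl.
  destruct H as [H1 [H2 H3]]. f_equal.
  transitivity ((a*a+c*c)*x + (a*b+c*d)*y). ring. rewrite H1, H3; ring.
  transitivity ((a*b+c*d)*x + (b*b+d*d)*y). ring. rewrite H2, H3; ring. Qed.
Lemma orth_inv2 g x : orth g -> mat_app g (mat_app (mat_tr g) x) = x.
Proof. intros H. pose proof (orth_inv1 (mat_tr g) x (orth_tr g H)). destruct g as [[[a b] c] d]; simpl in *; auto. Qed.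

Lemma orth_norm g x : orth g -> dot (mat_app g x) (mat_app g x) = dot x x.
Proof. intros H; apply orth_dot; auto. Qed.

Lemma orth_rot th : orth (rot_mat th).
Proof. unfold orth, rot_mat. pose proof (sin2_cos2 th). unfold Rsqr in H. repeat split; nra. Qed.
Lemma orth_g1 : orth gamma1.
Proof. unfold orth, gamma1; repeat split; ring. Qed.

Lemma angle_ex a c : a * a + c * c = 1 -> exists th, cos th = a /\ sin th = c.
Proof. intros H. assert (-1 <= a <= 1) by nra.
  destruct (Rle_dec 0 c).
  - exists (acos a). rewrite cos_acos by auto. split; auto. rewrite sin_acos by auto.
    unfold Rsqr. replace (1 - a * a) with (c * c) by lra. apply sqrt_square; auto.
  - exists (- acos a). rewrite cos_neg, sin_neg, cos_acos by auto. split; auto. rewrite sin_acos by auto.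
    unfold Rsqr. replace (1 - a * a) with ((-c) * (-c)) by lra. rewrite sqrt_square; lra. Qed.

Lemma orth_cases g : orth g -> (exists th, g = rot_mat th) \/ (exists th, g = mat_mul (rot_mat th) gamma1).
Proof. destruct g as [[[a b] c] d]. intros H. apply orth_form in H. destruct H as [H1 [D [HD [-> ->]]]].
  assert (D = 1 \/ D = -1) as [->| ->] by nra.
  - left. destruct (angle_ex a c H1) as [th [Ec Es]]. exists th. unfold rot_mat. rewrite Ec, Es. repeat (apply injective_projections; simpl); ring.
  - right. destruct (angle_ex (-a) (-c)) as [th [Ec Es]]. nra. exists th. unfold rot_mat, gamma1; simpl.
    rewrite Ec, Es. repeat (apply injective_projections; simpl); ring. Qed.

Definition padd (x y : pt) : pt := (fst x + fst y, snd x + snd y).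
Definition psum (ks : list pt) : pt := fold_right padd (0, 0) ks.
Lemma mat_app_opp g x : mat_app g (pt_opp x) = pt_opp (mat_app g x).
Proof. destruct g as [[[a b] c] d], x; unfold pt_opp; simpl; f_equal; ring. Qed.
Lemma mat_app_psum g ks : mat_app g (psum ks) = psum (map (mat_app g) ks).
Proof. induction ks as [|k ks IH]; destruct g as [[[a b] c] d]; simpl. f_equal; ring.
  rewrite <- IH. destruct (psum ks), k; unfold padd; simpl; f_equal; ring. Qed.

Lemma orth_inj g x y : orth g -> mat_app g x = mat_app g y -> x = y.
Proof. intros H E. rewrite <- (orth_inv1 g x H), <- (orth_inv1 g y H), E. auto. Qed.

Lemma on_circle_orth K g x : orth g -> on_circle K (mat_app g x) <-> on_circle K x.
Proof. intros H. unfold on_circle. pose proof (orth_norm g x H) as E. unfold dot in E.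
  assert (E2 : fst (mat_app g x) ^ 2 + snd (mat_app g x) ^ 2 = fst x ^ 2 + snd x ^ 2) by (simpl; lra).
  rewrite E2. tauto. Qed.

Section Pts.
Variables (L1 L2 N2 : R).
Hypotheses (h0 : 0 < N2) (h1 : N2 < L2) (h2 : L2 < L1) (hc : L1 * L1 = L2 * L2 + N2 * N2).

Definition wv := wave L1 L2 N2.
Definition ptj (j : nat) : pt := if Nat.ltb j 6 then wv j else pt_opp (wv (j - 6)).
Definition Al : list pt := map ptj (seq 0 12).
Definition flip (j : nat) : nat := if Nat.ltb j 6 then (j + 6)%nat else (j - 6)%nat.

Ltac cases12 i := destruct i as [|[|[|[|[|[|[|[|[|[|[|[|i]]]]]]]]]]]]; try lia.

Lemma ptj_inj i j : (i < 12)%nat -> (j < 12)%nat -> ptj i = ptj j -> i = j.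
Proof. intros Hi Hj E. cases12 i; cases12 j; try reflexivity; exfalso;
  unfold ptj, wv, pt_opp in E; simpl in E; injection E; intros; lra. Qed.

Lemma In_Al x : In x Al <-> exists j, (j < 12)%nat /\ x = ptj j.
Proof. unfold Al. rewrite in_map_iff. split.
  - intros [j [<- Hj]]. apply in_seq in Hj. exists j; split; auto; lia.
  - intros [j [Hj ->]]. exists j; split; auto. apply in_seq; lia. Qed.

Lemma ptj_in j : (j < 12)%nat -> In (ptj j) Al.
Proof. intros; apply In_Al; eauto. Qed.

Lemma NoDup_Al : NoDup Al.
Proof. unfold Al. apply FinFun.Injective_map_NoDup_in. intros i j Hi Hj. apply in_seq in Hi, Hj.
  apply ptj_inj; lia. apply seq_NoDup. Qed.

Lemma emb_unfold v x : emb L1 L2 N2 v x =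
  if pt_eqb x (ptj 0) then v 0%nat else if pt_eqb x (ptj 6) then Cconj (v 0%nat) else
  if pt_eqb x (ptj 1) then v 1%nat else if pt_eqb x (ptj 7) then Cconj (v 1%nat) else
  if pt_eqb x (ptj 2) then v 2%nat else if pt_eqb x (ptj 8) then Cconj (v 2%nat) else
  if pt_eqb x (ptj 3) then v 3%nat else if pt_eqb x (ptj 9) then Cconj (v 3%nat) else
  if pt_eqb x (ptj 4) then v 4%nat else if pt_eqb x (ptj 10) then Cconj (v 4%nat) else
  if pt_eqb x (ptj 5) then v 5%nat else if pt_eqb x (ptj 11) then Cconj (v 5%nat) else RtoC 0.
Proof. reflexivity. Qed.

Ltac eqb_step := match goal with |- context [pt_eqb (ptj ?a) (ptj ?b)] =>
  first [ rewrite (pt_eqb_eq (ptj a) (ptj b)) by reflexivity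
        | rewrite (pt_eqb_neq (ptj a) (ptj b)) by (let E := fresh in intro E; apply ptj_inj in E; lia) ] end.

Lemma emb_pt v j : (j < 12)%nat -> emb L1 L2 N2 v (ptj j) = cvar v j.
Proof. intros Hj. rewrite emb_unfold. cases12 j; repeat eqb_step; reflexivity. Qed.

Lemma emb_out v x : ~ In x Al -> emb L1 L2 N2 v x = RtoC 0.
Proof. intros H. assert (Hn : forall j, (j < 12)%nat -> pt_eqb x (ptj j) = false).
  { intros j Hj. apply pt_eqb_neq. intros ->. apply H, ptj_in; auto. }
  rewrite emb_unfold. rewrite !Hn by lia. reflexivity. Qed.

Lemma flip_lt j : (j < 12)%nat -> (flip j < 12)%nat.
Proof. intros; unfold flip; destruct (Nat.ltb_spec j 6); lia. Qed.

Lemma ptj_opp j : (j < 12)%nat -> pt_opp (ptj j) = ptj (flip j).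
Proof. intros Hj. cases12 j; unfold ptj, flip; simpl; auto; apply pt_opp_opp. Qed.

Lemma cvar_flip v j : (j < 12)%nat -> cvar v (flip j) = Cconj (cvar v j).
Proof. intros Hj. cases12 j; unfold cvar, flip; simpl; auto; rewrite Cconj_conj; auto. Qed.

Lemma Al_symm : symmZ Al.
Proof. intros x Hx. apply In_Al in Hx. destruct Hx as [j [Hj ->]]. rewrite ptj_opp by auto.
  apply ptj_in, flip_lt; auto. Qed.

Lemma Al_circle x : In x Al -> on_circle L1 x.
Proof. intros Hx. apply In_Al in Hx. destruct Hx as [j [Hj ->]]. unfold on_circle.
  rewrite <- (sqrt_square L1) by lra. f_equal.
  cases12 j; unfold ptj, wv, pt_opp; simpl; first [ring | rewrite hc; ring]. Qed.

Definition g1p (j : nat) : nat :=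
  match j with 0 => 6 | 1 => 1 | 2 => 9 | 3 => 8 | 4 => 11 | 5 => 10
  | 6 => 0 | 7 => 7 | 8 => 3 | 9 => 2 | 10 => 5 | _ => 4 end.

Lemma g1_ptj j : (j < 12)%nat -> mat_app gamma1 (ptj j) = ptj (g1p j).
Proof. intros Hj. cases12 j; unfold ptj, wv, pt_opp, gamma1; simpl; apply injective_projections; simpl; ring. Qed.

Lemma g1_Al x : In x Al -> In (mat_app gamma1 x) Al.
Proof. intros Hx. apply In_Al in Hx. destruct Hx as [j [Hj ->]]. rewrite g1_ptj by auto.
  apply ptj_in. cases12 j; simpl; lia. Qed.

Lemma g1_invol x : mat_app gamma1 (mat_app gamma1 x) = x.
Proof. destruct x; unfold gamma1; simpl; apply injective_projections; simpl; ring. Qed.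

Definition coords (b : field) : C6 := fun i => b (wv i).

Lemma cvar_coords b m : slice b -> (m < 12)%nat -> cvar (coords b) m = b (ptj m).
Proof. intros Hs Hm. unfold cvar, coords, ptj. destruct (Nat.ltb m 6); [auto|]. rewrite Hs; auto. Qed.


Lemma emb_coords b x : slice b -> suppZ Al b -> emb L1 L2 N2 (coords b) x = b x.
Proof. intros Hs Hb. destruct (classic (In x Al)) as [H|H].
  - apply In_Al in H. destruct H as [j [Hj ->]]. rewrite emb_pt by auto. apply cvar_coords; auto.
  - rewrite emb_out by auto. destruct (classic (b x = RtoC 0)) as [E|E]; auto.
    exfalso; apply H, Hb; auto. Qed.

Lemma emb_slice v : slice (emb L1 L2 N2 v).
Proof. intros x. destruct (classic (In x Al)) as [H|H].
  - apply In_Al in H. destruct H as [j [Hj ->]]. rewrite ptj_opp by auto.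
    rewrite !emb_pt by (auto using flip_lt). apply cvar_flip; auto.
  - rewrite !emb_out; auto. unfold Cconj; simpl. apply injective_projections; simpl; ring.
    intros H'. apply H. rewrite <- (pt_opp_opp x). apply Al_symm; auto. Qed.

Lemma emb_supp v : suppZ Al (emb L1 L2 N2 v).
Proof. intros x Hx. destruct (classic (In x Al)); auto. exfalso; apply Hx, emb_out; auto. Qed.


Lemma evP_app T1 T2 b : evP (T1 ++ T2) b = Cplus (evP T1 b) (evP T2 b).
Proof. unfold evP. rewrite map_app, sumC_app. auto. Qed.
Lemma evP_scal (c : C) T b : evP (map (fun cq => (Cmult c (fst cq), snd cq)) T) b = Cmult c (evP T b).
Proof. unfold evP. rewrite map_map, <- sumC_scal. apply sumC_ext; intros; simpl; ring. Qed.
Lemma evP_mapq (f : pt -> pt) T b : evP (map (fun cq => (fst cq, map f (snd cq))) T) b = evP T (fun x => b (f x)).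
Proof. unfold evP. rewrite map_map. apply sumC_ext; intros; simpl. rewrite map_map. auto. Qed.
Lemma evP_ext T b b' : (forall x, b x = b' x) -> evP T b = evP T b'.
Proof. intros H. replace b' with b; auto. apply functional_extensionality; auto. Qed.
Lemma sumC_conj l : Cconj (sumC l) = sumC (map Cconj l).
Proof. induction l; unfold sumC in *; simpl. unfold Cconj; simpl; apply injective_projections; simpl; ring.
  rewrite Cplus_conj, IHl; auto. Qed.
Lemma prodC_conj l : Cconj (prodC l) = prodC (map Cconj l).
Proof. induction l; unfold prodC in *; simpl. unfold Cconj; simpl; apply injective_projections; simpl; ring.
  rewrite Cmult_conj, IHl; auto. Qed.

Lemma slice_orth g b : orth g -> slice b -> slice (orth_act g b).
Proof. intros Hg Hb x. unfold orth_act. rewrite mat_app_opp. apply Hb. Qed.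
Lemma supp_orth g b : orth g -> suppZ Al b -> (forall x, In x Al -> In (mat_app g x) Al) ->
  suppZ Al (orth_act g b).
Proof. intros Hg Hb Hmap x Hx. unfold orth_act in Hx. apply Hb in Hx. apply Hmap in Hx.
  rewrite orth_inv2 in Hx; auto. Qed.

Lemma mat_tr_mul_app A B x : mat_app (mat_tr (mat_mul A B)) x = mat_app (mat_tr B) (mat_app (mat_tr A) x).
Proof. destruct A as [[[a b] c] d], B as [[[a' b'] c'] d'], x; simpl; f_equal; ring. Qed.

Lemma cexp_mi_opp s t x : cexp_mi (s * fst (pt_opp x) + t * snd (pt_opp x)) = Cconj (cexp_mi (s * fst x + t * snd x)).
Proof. unfold cexp_mi, Cconj, pt_opp; simpl.
  replace (s * - fst x + t * - snd x) with (- (s * fst x + t * snd x)) by ring.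
  rewrite cos_neg, sin_neg. auto. Qed.

Lemma slice_trans s t b : slice b -> slice (trans_act s t b).
Proof. intros Hb x. unfold trans_act. rewrite Hb, cexp_mi_opp, Cmult_conj. auto. Qed.
Lemma supp_trans s t Z b : suppZ Z b -> suppZ Z (trans_act s t b).
Proof. intros Hb x Hx. apply Hb. intros E. apply Hx. unfold trans_act. rewrite E. ring. Qed.

Variables (p : nat) (Ft : C6 -> C6).
Hypotheses (Hpoly : hom_poly_field_C6 p Ft) (HG : Gamma_equivariant L1 L2 N2 Ft)
 (Hrot : forall th v v', ext_eq (rot_act th (emb L1 L2 N2 v)) (emb L1 L2 N2 v') ->
         ext_eq (rot_act th (emb L1 L2 N2 (Ft v))) (emb L1 L2 N2 (Ft v'))).

Definition termsP (i : nat) (T : list (C * list nat)) :=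
  (forall c m, In (c, m) T -> length m = p /\ forall j, In j m -> (j < 12)%nat) /\ forall v, Ft v i = fold_right Cplus (RtoC 0) (map (fun cm => Cmult (fst cm) (mono_eval v (snd cm))) T).
Definition terms (i : nat) := epsilon (inhabits []) (termsP i).
Lemma terms_spec i : (i < 6)%nat -> termsP i (terms i).
Proof. intros Hi. unfold terms. apply epsilon_spec. apply Hpoly; auto. Qed.

Definition Hj (j : nat) : list (C * list pt) :=
  if Nat.ltb j 6 then map (fun cm => (fst cm, map ptj (snd cm))) (terms j)
  else map (fun cm => (Cconj (fst cm), map (fun m => ptj (flip m)) (snd cm))) (terms (j - 6)).
Definition Hk (k : pt) : list (C * list pt) :=
  if excluded_middle_informative (In k Al) then
    Hj (epsilon (inhabits 0%nat) (fun j => (j < 12)%nat /\ k = ptj j)) else [].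

Lemma Hk_ptj j : (j < 12)%nat -> Hk (ptj j) = Hj j.
Proof. intros Hj'. unfold Hk. destruct excluded_middle_informative as [H|H].
  - f_equal. pose proof (epsilon_spec (inhabits 0%nat) (fun i => (i < 12)%nat /\ ptj j = ptj i)) as E.
    destruct E as [E1 E2]. exists j; auto. apply ptj_inj in E2; auto.
  - exfalso; apply H, ptj_in; auto. Qed.
Lemma Hk_out k : ~ In k Al -> Hk k = [].
Proof. intros H; unfold Hk; destruct excluded_middle_informative; tauto. Qed.

Lemma Hk_terms k c qs : In (c, qs) (Hk k) -> length qs = p /\ forall q, In q qs -> In q Al.
Proof. destruct (classic (In k Al)) as [H|H].
  - apply In_Al in H. destruct H as [j [Hj' ->]]. rewrite Hk_ptj by auto. unfold Hj.
    destruct (Nat.ltb_spec j 6) as [Hl|Hl]; intros Hin; apply in_map_iff in Hin;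
    destruct Hin as [[c' m] [E Hm]]; injection E as <- <-.
    + destruct (proj1 (terms_spec j Hl) c' m Hm) as [Hlen Hlt]. rewrite length_map; split; auto.
      intros q Hq. apply in_map_iff in Hq. destruct Hq as [i [<- Hi]]. apply ptj_in; auto.
    + destruct (proj1 (terms_spec (j - 6) ltac:(lia)) c' m Hm) as [Hlen Hlt]. rewrite length_map; split; auto.
      intros q Hq. apply in_map_iff in Hq. destruct Hq as [i [<- Hi]]. apply ptj_in, flip_lt; auto.
  - rewrite Hk_out by auto. intros []. Qed.

Lemma Out w b : (forall m, (m < 12)%nat -> cvar w m = b (ptj m)) ->
  forall k, emb L1 L2 N2 (Ft w) k = evP (Hk k) b.
Proof. intros Hw k. destruct (classic (In k Al)) as [H|H].
  - apply In_Al in H. destruct H as [j [Hj' ->]]. rewrite emb_pt, Hk_ptj by auto. unfold cvar, Hj.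
    destruct (Nat.ltb_spec j 6) as [Hl|Hl].
    + destruct (terms_spec j Hl) as [T1 T2]. rewrite T2. unfold evP. rewrite map_map.
      change (fold_right Cplus (RtoC 0) ?l) with (sumC l). apply sumC_ext. intros [c m] Hcm. simpl.
      f_equal. unfold mono_eval. rewrite map_map. apply prodC_ext. intros i Hi.
      apply Hw. apply (T1 c m Hcm); auto.
    + destruct (terms_spec (j - 6) ltac:(lia)) as [T1 T2]. rewrite T2. unfold evP. rewrite map_map.
      change (fold_right Cplus (RtoC 0) ?l) with (sumC l). rewrite sumC_conj, map_map.
      apply sumC_ext. intros [c m] Hcm. simpl. rewrite Cmult_conj. f_equal.
      unfold mono_eval. change (fold_right Cmult (RtoC 1) ?l) with (prodC l).
      rewrite prodC_conj, !map_map. apply prodC_ext. intros i Hi.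
      assert (i < 12)%nat by (apply (T1 c m Hcm); auto).
      rewrite <- cvar_flip by auto. apply Hw, flip_lt; auto.
  - rewrite emb_out, Hk_out by auto. reflexivity. Qed.

Lemma Out_slice b : slice b -> suppZ Al b -> forall k,
  emb L1 L2 N2 (Ft (coords b)) k = evP (Hk k) b.
Proof. intros Hs Hb. apply Out. intros m Hm. apply cvar_coords; auto. Qed.

Lemma transfer_orth g : orth g -> forall b, slice b -> suppZ Al b -> suppZ Al (orth_act g b) ->
  forall k, evP (Hk (mat_app g k)) (orth_act g b) = evP (Hk k) b.
Proof. intros Hg b Hs Hb Hgb k.
  rewrite <- Out_slice, <- Out_slice; auto using slice_orth.
  destruct (orth_cases g Hg) as [[th ->]|[th ->]].
  - symmetry. rewrite <- (orth_inv1 (rot_mat th) k) at 1 by auto.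
    apply (Hrot th (coords b) (coords (orth_act (rot_mat th) b))).
    intros x. unfold rot_act. rewrite emb_coords by (auto using slice_orth). unfold orth_act.
    rewrite emb_coords; auto.
  - set (b1 := orth_act gamma1 b).
    assert (Hs1 : slice b1) by (apply slice_orth; auto using orth_g1).
    assert (Hb1 : suppZ Al b1) by (apply supp_orth; auto using orth_g1, g1_Al).
    assert (E1 := Hrot th (coords b1) (coords (orth_act (mat_mul (rot_mat th) gamma1) b))).
    assert (E2 := proj1 HG (coords b) (coords b1)).
    rewrite <- E1.
    + unfold rot_act, orth_act.
      assert (E3 : mat_app (mat_tr (rot_mat th)) (mat_app (mat_mul (rot_mat th) gamma1) k) = mat_app gamma1 k).
      { rewrite mat_app_mul. apply orth_inv1, orth_rot. }
      rewrite E3. rewrite E2. unfold orth_act. change (mat_tr gamma1) with gamma1. rewrite g1_invol. auto.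
      intros x. unfold b1, orth_act. rewrite !emb_coords; auto.
    + intros x. change (rot_act th ?f x) with (f (mat_app (mat_tr (rot_mat th)) x)). rewrite (emb_coords b1) by auto.
      rewrite (emb_coords (orth_act _ b)) by auto using slice_orth, orth_mul, orth_rot, orth_g1.
      unfold b1, orth_act. rewrite mat_tr_mul_app. auto. Qed.

Lemma transfer_trans s t b : slice b -> suppZ Al b -> forall k,
  evP (Hk k) (trans_act s t b) = Cmult (cexp_mi (s * fst k + t * snd k)) (evP (Hk k) b).
Proof. intros Hs Hb k. rewrite <- !Out_slice; auto using slice_trans, supp_trans.
  apply (proj2 (proj2 HG) s t (coords b) (coords (trans_act s t b))).
  intros x. rewrite !emb_coords; auto using slice_trans, supp_trans. unfold trans_act. rewrite emb_coords; auto. Qed.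


Lemma lift_orth g : orth g -> forall Z, symmZ Z -> (forall x, In x Z -> In x Al) ->
  (forall x, In x Z -> In (mat_app g x) Al) -> forall b, suppZ Z b -> forall k,
  evP (Hk (mat_app g k)) (orth_act g b) = evP (Hk k) b.
Proof. intros Hg Z HZ HZA HgZ b Hb k.
  set (D := map (fun cq => (fst cq, map (mat_app (mat_tr g)) (snd cq))) (Hk (mat_app g k)) ++
            map (fun cq => (Cmult (RtoC (-1)) (fst cq), snd cq)) (Hk k)).
  assert (ED : forall b, evP D b = Cminus (evP (Hk (mat_app g k)) (orth_act g b)) (evP (Hk k) b)).
  { intros b'. unfold D. rewrite evP_app, evP_mapq, evP_scal. unfold orth_act. ring. }
  assert (H0 : evP D b = RtoC 0).
  { apply (Y5 D Z HZ); auto. intros b' Hs' Hb'. rewrite ED. rewrite transfer_orth; auto.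
    ring. intros x Hx; apply HZA, Hb'; auto.
    intros x Hx. unfold orth_act in Hx. apply Hb' in Hx. apply HgZ in Hx. rewrite orth_inv2 in Hx; auto. }
  rewrite ED in H0. transitivity (Cplus (Cminus (evP (Hk (mat_app g k)) (orth_act g b)) (evP (Hk k) b)) (evP (Hk k) b)).
  ring. rewrite H0; ring. Qed.

Definition ph (s t : R) (x : pt) : C := cexp_mi (s * fst x + t * snd x).

Lemma lift_trans s t b : suppZ Al b -> forall k,
  evP (Hk k) (trans_act s t b) = Cmult (ph s t k) (evP (Hk k) b).
Proof. intros Hb k.
  set (D := map (fun cq => (Cmult (fst cq) (prodC (map (ph s t) (snd cq))), snd cq)) (Hk k) ++
            map (fun cq => (Cmult (Copp (ph s t k)) (fst cq), snd cq)) (Hk k)).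
  assert (ED : forall b, evP D b = Cminus (evP (Hk k) (trans_act s t b)) (Cmult (ph s t k) (evP (Hk k) b))).
  { intros b'. unfold D. rewrite evP_app, evP_scal.
    assert (evP (map (fun cq => (Cmult (fst cq) (prodC (map (ph s t) (snd cq))), snd cq)) (Hk k)) b'
            = evP (Hk k) (trans_act s t b')) as ->.
    { unfold evP. rewrite map_map. apply sumC_ext. intros cq _. simpl. unfold trans_act.
      rewrite prodC_mult. unfold ph. ring. }
    ring. }
  assert (H0 : evP D b = RtoC 0).
  { apply (Y5 D Al Al_symm); auto. intros b' Hs' Hb'. rewrite ED. rewrite transfer_trans; auto.
    unfold ph; ring. }
  rewrite ED in H0. transitivity (Cplus (Cminus (evP (Hk k) (trans_act s t b)) (Cmult (ph s t k) (evP (Hk k) b))) (Cmult (ph s t k) (evP (Hk k) b))).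
  ring. rewrite H0; ring. Qed.

Definition d0 : pt := (0, 0).
Definition sel (s : list bool) (ks : list pt) (w : nat -> C) : field := fun x =>
  sumC (map (fun j => Cmult (ind (nth j s false = true)) (Cmult (w j) (ind (nth j ks d0 = x))))
    (seq 0 (length ks))).
Definition Tcw (w : nat -> C) (ks : list pt) (k : pt) : C :=
  sumC (map (fun s => Cmult (sgn s) (evP (Hk k) (sel s ks w))) (tuples BB (length ks))).
Definition Tc := Tcw (fun _ => RtoC 1).

Lemma Tcw_formula w ks k : length ks = p -> Tcw w ks k =
  sumC (map (fun cq => Cmult (fst cq) (sumC (map (fun phi => Cmult (ind (surj (length ks) phi))
     (pz (fun q j => Cmult (w j) (ind (nth j ks d0 = q))) (snd cq) phi))
     (tuples (seq 0 (length ks)) (length ks))))) (Hk k)).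
Proof. intros Hlen. unfold Tcw, evP.
  rewrite (sumC_ext _ (fun s => sumC (map (fun cq => Cmult (fst cq) (Cmult (sgn s)
     (prodC (map (sel s ks w) (snd cq))))) (Hk k)))).
  2:{ intros s _. rewrite <- sumC_scal. apply sumC_ext. intros; ring. }
  rewrite sumC_swap. apply sumC_ext. intros [c qs] Hcq. simpl. rewrite sumC_scal. f_equal.
  destruct (Hk_terms k c qs Hcq) as [Hq _].
  pose proof (Y2 (length ks) qs (fun q j => Cmult (w j) (ind (nth j ks d0 = q)))) as HY.
  rewrite Hq, <- Hlen in HY. exact HY. Qed.

Lemma Tcw_scale w ks k : length ks = p -> Tcw w ks k = Cmult (prodC (map w (seq 0 (length ks)))) (Tc ks k).
Proof. intros Hlen. unfold Tc. rewrite !Tcw_formula by auto.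
  rewrite <- (sumC_scal (prodC (map w (seq 0 (length ks))))).
  apply sumC_ext. intros [c qs] Hcq. simpl. destruct (Hk_terms k c qs Hcq) as [Hq _].
  transitivity (Cmult c (Cmult (prodC (map w (seq 0 (length ks))))
    (sumC (map (fun phi => Cmult (ind (surj (length ks) phi)) (pz (fun q j => Cmult (RtoC 1) (ind (nth j ks d0 = q))) qs phi)) (tuples (seq 0 (length ks)) (length ks)))))).
  2:{ ring. }
  f_equal. rewrite <- sumC_scal. apply sumC_ext. intros phi Hphi.
  rewrite pz_mult, pz_right. rewrite (pz_mult (fun _ _ => RtoC 1)), pz_right.
  2,3: apply In_tuples in Hphi; lia.
  unfold ind at 1 3. destruct excluded_middle_informative as [Hs|Hs].
  - rewrite (prodC_perm _ _ (Permutation_map _ (surj_perm _ _ Hphi Hs))).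
    assert (prodC (map (fun _ : nat => RtoC 1) phi) = RtoC 1) as ->.
    { clear. induction phi; unfold prodC in *; simpl; auto. rewrite IHphi; ring. }
    ring.
  - ring. Qed.

Lemma sel_supp s ks w : suppZ ks (sel s ks w).
Proof. intros x Hx. destruct (classic (In x ks)) as [H|H]; auto. exfalso; apply Hx.
  unfold sel. apply sumC_zero. intros j Hj. apply in_seq in Hj. rewrite (ind_false (nth j ks d0 = x)).
  ring. intros E. apply H. rewrite <- E. apply nth_In; lia. Qed.

Lemma trans_sel s t s' ks : forall x, trans_act s t (sel s' ks (fun _ => RtoC 1)) x =
  sel s' ks (fun j => ph s t (nth j ks d0)) x.
Proof. intros x. unfold trans_act, sel. rewrite <- sumC_scal. apply sumC_ext. intros j _.
  unfold ind at 2 4. destruct excluded_middle_informative as [E|E].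
  rewrite E; unfold ph; ring. ring. Qed.

Lemma cexp_mi_add a b : cexp_mi (a + b) = Cmult (cexp_mi a) (cexp_mi b).
Proof. unfold cexp_mi. apply injective_projections; simpl; rewrite ?cos_plus, ?sin_plus; ring. Qed.

Lemma prod_ph s t ks : prodC (map (ph s t) ks) = ph s t (psum ks).
Proof. induction ks as [|k ks IH]; simpl.
  - unfold prodC, ph, cexp_mi; simpl. rewrite !Rmult_0_r, Rplus_0_r, cos_0, sin_0.
    apply injective_projections; simpl; ring.
  - unfold prodC in *; simpl. rewrite IH. unfold ph, padd; simpl. rewrite <- cexp_mi_add. f_equal. ring. Qed.

Lemma supp_sub Z Z' b : suppZ Z b -> (forall x, In x Z -> In x Z') -> suppZ Z' b.
Proof. intros H H' x Hx; auto. Qed.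

Lemma Tc_trans s t ks k : length ks = p -> (forall q, In q ks -> In q Al) ->
  Cmult (ph s t k) (Tc ks k) = Cmult (ph s t (psum ks)) (Tc ks k).
Proof. intros Hlen HA.
  transitivity (Tcw (fun j => ph s t (nth j ks d0)) ks k).
  - unfold Tc, Tcw. rewrite <- sumC_scal. apply sumC_ext. intros s' _.
    rewrite <- (evP_ext _ _ _ (trans_sel s t s' ks)). rewrite lift_trans. ring.
    apply (supp_sub ks); auto. apply sel_supp.
  - rewrite Tcw_scale by auto. f_equal. rewrite <- (map_map (fun j => nth j ks d0) (ph s t)).
    rewrite map_nth_seq. apply prod_ph. Qed.

Lemma cexp_mi_PI a : cexp_mi (a + PI) = Copp (cexp_mi a).
Proof. unfold cexp_mi. rewrite neg_cos, neg_sin. apply injective_projections; simpl; ring. Qed.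

Lemma Tc_zero ks k : length ks = p -> (forall q, In q ks -> In q Al) -> psum ks <> k -> Tc ks k = RtoC 0.
Proof. intros Hlen HA Hne.
  set (dx := fst (psum ks) - fst k). set (dy := snd (psum ks) - snd k).
  assert (Hr : dx * dx + dy * dy <> 0).
  { intros E. apply Hne. assert (dx = 0) by nra. assert (dy = 0) by nra.
    destruct (psum ks), k; unfold dx, dy in *; simpl in *. f_equal; lra. }
  set (s := PI * dx / (dx * dx + dy * dy)). set (t := PI * dy / (dx * dx + dy * dy)).
  pose proof (Tc_trans s t ks k Hlen HA) as E.
  assert (ph s t (psum ks) = Copp (ph s t k)).
  { unfold ph. rewrite <- cexp_mi_PI. f_equal. unfold s, t, dx, dy in *. field. auto. }
  rewrite H in E.
  assert (E2 : Cmult (ph s t k) (Tc ks k) = RtoC 0).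
  { transitivity (Cmult (RtoC (/2)) (Cplus (Cmult (ph s t k) (Tc ks k)) (Cmult (Copp (ph s t k)) (Tc ks k)))).
    2:{ unfold RtoC, Cmult, Cplus, Copp; simpl. apply injective_projections; simpl; ring. }
    rewrite <- E. destruct (Cmult (ph s t k) (Tc ks k)) as [u v]. unfold RtoC, Cmult, Cplus; simpl.
    apply injective_projections; simpl; field. }
  transitivity (Cmult (Cmult (Cconj (ph s t k)) (ph s t k)) (Tc ks k)).
  - assert (Cmult (Cconj (ph s t k)) (ph s t k) = RtoC 1) as ->.
    { unfold ph, cexp_mi, Cconj. pose proof (sin2_cos2 (s * fst k + t * snd k)) as S2. unfold Rsqr in S2.
      apply injective_projections; simpl; nra. }
    ring.
  - rewrite <- Cmult_assoc, E2. ring. Qed.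

Lemma Tc_orth g ks k : orth g -> (forall q, In q ks -> In q Al) -> (forall q, In q ks -> In (mat_app g q) Al) ->
  Tc (map (mat_app g) ks) (mat_app g k) = Tc ks k.
Proof. intros Hg HA HgA. unfold Tc, Tcw. rewrite length_map. apply sumC_ext. intros s _. f_equal.
  transitivity (evP (Hk (mat_app g k)) (orth_act g (sel s ks (fun _ => RtoC 1)))).
  2: apply (lift_orth g Hg (ks ++ map pt_opp ks)).
  - apply evP_ext. intros x. unfold sel, orth_act. rewrite length_map. apply sumC_ext. intros j Hj.
    apply in_seq in Hj. rewrite (nth_map_lt _ _ _ d0) by lia. f_equal. f_equal. apply ind_iff. split.
    + intros <-. symmetry; apply orth_inv1; auto.
    + intros ->. apply orth_inv2; auto.
  - intros x Hx. apply in_app_iff in Hx. apply in_app_iff. destruct Hx as [Hx|Hx].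
    right. apply in_map; auto. left. apply in_map_iff in Hx. destruct Hx as [y [<- Hy]]. rewrite pt_opp_opp; auto.
  - intros x Hx. apply in_app_iff in Hx. destruct Hx as [Hx|Hx]; auto.
    apply in_map_iff in Hx. destruct Hx as [y [<- Hy]]. apply Al_symm; auto.
  - intros x Hx. apply in_app_iff in Hx. destruct Hx as [Hx|Hx]; auto.
    apply in_map_iff in Hx. destruct Hx as [y [<- Hy]]. rewrite mat_app_opp. apply Al_symm; auto.
  - apply (supp_sub ks). apply sel_supp. intros x Hx; apply in_app_iff; auto. Qed.

Definition Nsurj : C := sumC (map (fun phi => ind (surj p phi)) (tuples (seq 0 p) p)).

Lemma fst_sum_ind {X} (R : X -> Prop) L : 0 <= fst (sumC (map (fun y => ind (R y)) L)) /\
  ((exists y, In y L /\ R y) -> 1 <= fst (sumC (map (fun y => ind (R y)) L))).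
Proof. induction L as [|y L IH].
  - split. unfold sumC; simpl; lra. intros [y [[] _]].
  - rewrite map_cons, sumC_cons. change (fst (Cplus ?u ?v)) with (fst u + fst v).
    destruct IH as [IH1 IH2].
    destruct (classic (R y)) as [Hr|Hr]; [rewrite ind_true by auto|rewrite ind_false by auto]; unfold RtoC; cbn [fst]; split; try lra.
    all: intros [z [[<-|Hz] Rz]]; try contradiction; try lra.
    all: assert (1 <= fst (sumC (map (fun y => ind (R y)) L))); [apply IH2; eauto|lra]. Qed.

Lemma Nsurj_nz : Nsurj <> RtoC 0.
Proof. intros E. destruct (fst_sum_ind (surj p) (tuples (seq 0 p) p)) as [_ H].
  unfold Nsurj in E. rewrite E in H. simpl in H. assert (1 <= 0); [|lra]. apply H.
  exists (seq 0 p). split. apply In_tuples. split. apply length_seq. auto.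
  intros j Hj. apply in_seq; lia. Qed.

Definition Q (ks : list pt) (k : pt) : C := Cmult (Cinv Nsurj) (Tc ks k).

Lemma recon a k : sumC (map (fun ks => Cmult (Q ks k) (prodC (map a ks))) (tuples Al p)) = evP (Hk k) a.
Proof.
  rewrite (sumC_ext _ (fun ks => sumC (map (fun cq => Cmult (Cmult (Cinv Nsurj) (fst cq))
     (sumC (map (fun phi => Cmult (ind (surj p phi)) (Cmult (prodC (map a ks))
        (pz (fun q j => ind (nth j ks d0 = q)) (snd cq) phi))) (tuples (seq 0 p) p)))) (Hk k)))).
  2:{ intros ks Hks. apply In_tuples in Hks. destruct Hks as [Hlen _].
      unfold Q, Tc. rewrite Tcw_formula by auto. rewrite Hlen.
      rewrite <- sumC_scal, <- sumC_scal_r. apply sumC_ext. intros [c qs] _. simpl.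
      transitivity (Cmult (Cmult (Cinv Nsurj) c) (Cmult (sumC (map (fun phi => Cmult (ind (surj p phi))
         (pz (fun q j => Cmult (RtoC 1) (ind (nth j ks d0 = q))) qs phi)) (tuples (seq 0 p) p))) (prodC (map a ks)))).
      ring. f_equal. rewrite <- sumC_scal_r. apply sumC_ext. intros phi _.
      rewrite (pz_ext _ (fun q j => ind (nth j ks d0 = q))). ring. intros; ring. }
  rewrite sumC_swap. unfold evP. apply sumC_ext. intros [c qs] Hcq. simpl.
  destruct (Hk_terms k c qs Hcq) as [Hq HqA].
  rewrite sumC_scal, sumC_swap.
  rewrite (sumC_ext _ (fun phi => Cmult (ind (surj p phi)) (prodC (map a qs)))).
  - rewrite sumC_scal_r. fold Nsurj. field. apply Nsurj_nz.
  - intros phi Hphi. rewrite sumC_scal. unfold ind at 1 3. destruct excluded_middle_informative as [Hs|Hs].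
    + f_equal. rewrite <- Hq in Hphi, Hs |- *. apply delta_sum; auto. apply NoDup_Al.
    + ring. Qed.

Definition idm : mat2 := (1, 0, 0, 1).
Lemma orth_idm : orth idm.
Proof. unfold orth, idm; repeat split; ring. Qed.
Lemma idm_app x : mat_app idm x = x.
Proof. destruct x; unfold idm; simpl; f_equal; ring. Qed.

Definition good (g : mat2) (ks : list pt) := orth g /\ forall q, In q ks -> In (mat_app g q) Al.
Definition gch (ks : list pt) : mat2 := epsilon (inhabits idm) (fun g => good g ks).
Definition Pk (k : pt) (ks : list pt) : C :=
  if excluded_middle_informative (psum ks = k /\ exists g, good g ks)
  then Q (map (mat_app (gch ks)) ks) (mat_app (gch ks) k) else RtoC 0.

Lemma WD g h ks k : good g ks -> good h ks ->
  Q (map (mat_app g) ks) (mat_app g k) = Q (map (mat_app h) ks) (mat_app h k).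
Proof. intros [Hg HgA] [Hh HhA]. set (m := mat_mul h (mat_tr g)).
  assert (Hm : forall q, mat_app m (mat_app g q) = mat_app h q).
  { intros q. unfold m. rewrite mat_app_mul, orth_inv1; auto. }
  assert (Om : orth m) by (apply orth_mul; auto using orth_tr).
  replace (map (mat_app h) ks) with (map (mat_app m) (map (mat_app g) ks)).
  2:{ rewrite map_map. apply map_ext; auto. }
  rewrite <- Hm. unfold Q. f_equal. symmetry. apply Tc_orth; auto.
  - intros q Hq. apply in_map_iff in Hq. destruct Hq as [y [<- Hy]]; auto.
  - intros q Hq. apply in_map_iff in Hq. destruct Hq as [y [<- Hy]]; rewrite Hm; auto. Qed.

Lemma gch_spec ks : (exists g, good g ks) -> good (gch ks) ks.
Proof. intros H. unfold gch. apply epsilon_spec; auto. Qed.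

Lemma psum_orth g ks k : orth g -> (psum (map (mat_app g) ks) = mat_app g k <-> psum ks = k).
Proof. intros Hg. rewrite <- mat_app_psum. split. apply orth_inj; auto. intros ->; auto. Qed.

Lemma P_inv g k ks : orth g -> Pk (mat_app g k) (map (mat_app g) ks) = Pk k ks.
Proof. intros Hg. unfold Pk. pose proof (psum_orth g ks k Hg) as Ep.
  assert (Egood : (exists h, good h (map (mat_app g) ks)) <-> (exists h, good h ks)).
  { split.
    - intros [h [Hh HA]]. exists (mat_mul h g). split. apply orth_mul; auto.
      intros q Hq. rewrite mat_app_mul. apply HA, in_map; auto.
    - intros [h [Hh HA]]. exists (mat_mul h (mat_tr g)). split. apply orth_mul; auto using orth_tr.
      intros q Hq. apply in_map_iff in Hq. destruct Hq as [y [<- Hy]].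
      rewrite mat_app_mul, orth_inv1; auto. }
  destruct excluded_middle_informative as [[E1 E2]|A1]; destruct excluded_middle_informative as [[E3 E4]|A2].
  2:{ exfalso; apply A2; split; [apply Ep|apply Egood]; auto. }
  2:{ exfalso; apply A1; split; [apply Ep|apply Egood]; auto. }
  2:{ reflexivity. }
  pose proof (gch_spec _ E2) as G1. pose proof (gch_spec _ E4) as G2.
  set (hh1 := gch (map (mat_app g) ks)) in *. set (hh2 := gch ks) in *.
  rewrite map_map, <- mat_app_mul.
  rewrite (map_ext (fun x => mat_app hh1 (mat_app g x)) (mat_app (mat_mul hh1 g))) by (intros; rewrite mat_app_mul; auto).
  apply WD; auto. destruct G1 as [O1 A1]. split. apply orth_mul; auto.
  intros q Hq. rewrite mat_app_mul. apply A1, in_map; auto. Qed.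

Lemma P_Al k ks : length ks = p -> (forall q, In q ks -> In q Al) -> Pk k ks = Q ks k.
Proof. intros Hlen HA. assert (Gi : good idm ks) by (split; [apply orth_idm|intros; rewrite idm_app; auto]).
  unfold Pk. destruct excluded_middle_informative as [[E1 E2]|H].
  - rewrite (WD _ idm) by (auto using gch_spec). rewrite idm_app. f_equal.
    rewrite (map_ext _ (fun x => x)) by apply idm_app. apply map_id.
  - destruct (classic (psum ks = k)) as [E|E]. exfalso; apply H; split; eauto.
    unfold Q. rewrite Tc_zero by auto. ring. Qed.

Lemma drop_zero (a c : pt -> C) l : sumC (map (fun x => Cmult (a x) (c x)) l) =
  sumC (map (fun x => Cmult (a x) (c x)) (filter (fun x => if excluded_middle_informative (a x = RtoC 0) then false else true) l)).
Proof. induction l as [|x l IH]; [reflexivity|]. rewrite map_cons, sumC_cons. cbn [filter].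
  destruct excluded_middle_informative as [E|E].
  - rewrite IH, E. ring.
  - rewrite map_cons, sumC_cons, IH. auto. Qed.

Lemma sum_supp (a c : pt -> C) l l' : NoDup l -> NoDup l' -> (forall x, a x <> RtoC 0 -> In x l) ->
  (forall x, a x <> RtoC 0 -> In x l') ->
  sumC (map (fun x => Cmult (a x) (c x)) l) = sumC (map (fun x => Cmult (a x) (c x)) l').
Proof. intros Nd1 Nd2 S1 S2. rewrite (drop_zero a c l), (drop_zero a c l').
  apply sumC_perm, Permutation_map, NoDup_Permutation; auto using NoDup_filter.
  intros x. rewrite !filter_In. destruct excluded_middle_informative; split; intros [H1 H2]; try discriminate;
  split; auto. Qed.

Lemma indep (a : pt -> C) l l' : NoDup l -> NoDup l' -> (forall x, a x <> RtoC 0 -> In x l) ->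
  (forall x, a x <> RtoC 0 -> In x l') -> forall n (g : list pt -> C),
  sumC (map (fun ks => Cmult (g ks) (prodC (map a ks))) (tuples l n)) =
  sumC (map (fun ks => Cmult (g ks) (prodC (map a ks))) (tuples l' n)).
Proof. intros Nd1 Nd2 S1 S2 n. induction n as [|n IH]; intros g; simpl; auto.
  rewrite !sumC_flat_map.
  assert (E : forall L, sumC (map (fun x => sumC (map (fun ks => Cmult (g ks) (prodC (map a ks))) (map (cons x) (tuples L n)))) L) =
      sumC (map (fun x => Cmult (a x) (sumC (map (fun ks => Cmult (g (x :: ks)) (prodC (map a ks))) (tuples L n)))) L)).
  { intros L. apply sumC_ext. intros x _. rewrite map_map, <- sumC_scal. apply sumC_ext. intros ks _.
    simpl. unfold prodC; simpl. ring. }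
  rewrite !E. rewrite (sumC_ext (fun x => Cmult (a x) (sumC (map (fun ks => Cmult (g (x :: ks)) (prodC (map a ks))) (tuples l n))))
     (fun x => Cmult (a x) (sumC (map (fun ks => Cmult (g (x :: ks)) (prodC (map a ks))) (tuples l' n))))).
  apply sum_supp; auto. intros x _. rewrite (IH (fun ks => g (x :: ks))). auto. Qed.

Definition lch (a : field) : list pt := epsilon (inhabits []) (fun l => supp_list L1 a l).
Definition FF (a : field) (k : pt) : C :=
  sumC (map (fun ks => Cmult (Pk k ks) (prodC (map a ks))) (tuples (lch a) p)).

Lemma FF_list a l : supp_list L1 a l -> forall k,
  FF a k = sumC (map (fun ks => Cmult (Pk k ks) (prodC (map a ks))) (tuples l p)).
Proof. intros Hl k. unfold FF.
  assert (Hc : supp_list L1 a (lch a)) by (unfold lch; apply epsilon_spec; eauto).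
  destruct Hl as [N1' [_ S1]], Hc as [N2' [_ S2]]. apply indep; auto. Qed.

Lemma supp_list_orth g a l : orth g -> supp_list L1 a l -> supp_list L1 (orth_act g a) (map (mat_app g) l).
Proof. intros Hg [Nd [Hc Hs]]. split; [|split].
  - apply FinFun.Injective_map_NoDup; auto. intros x y; apply orth_inj; auto.
  - intros k Hk. apply in_map_iff in Hk. destruct Hk as [y [<- Hy]]. apply on_circle_orth; auto.
  - intros x Hx. unfold orth_act in Hx. apply Hs in Hx. rewrite <- (orth_inv2 g x Hg). apply in_map; auto. Qed.

Lemma FF_orth g a l : orth g -> supp_list L1 a l -> forall k,
  FF (orth_act g a) k = orth_act g (FF a) k.
Proof. intros Hg Hl k. rewrite (FF_list _ _ (supp_list_orth g a l Hg Hl)).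
  unfold orth_act at 2. rewrite (FF_list _ _ Hl). rewrite tuples_map, map_map. apply sumC_ext.
  intros ks _. rewrite map_map. f_equal.
  - rewrite <- (P_inv g (mat_app (mat_tr g) k) ks Hg). rewrite orth_inv2; auto.
  - apply prodC_ext. intros x _. unfold orth_act. rewrite orth_inv1; auto. Qed.

Lemma FF_trans s t a l : supp_list L1 a l -> forall k,
  FF (trans_act s t a) k = trans_act s t (FF a) k.
Proof. intros Hl k. assert (Hl' : supp_list L1 (trans_act s t a) l).
  { destruct Hl as [A [B Cc]]. split; [|split]; auto. intros x Hx. apply Cc. intros E; apply Hx.
    unfold trans_act; rewrite E; ring. }
  rewrite (FF_list _ _ Hl'). unfold trans_act at 2. rewrite (FF_list _ _ Hl).
  rewrite <- sumC_scal. apply sumC_ext. intros ks _. unfold trans_act.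
  rewrite prodC_mult. fold (ph s t). rewrite prod_ph.
  unfold Pk. destruct excluded_middle_informative as [[E _]|E].
  - rewrite E. unfold ph. ring.
  - ring. Qed.

Lemma FF_emb v k : FF (emb L1 L2 N2 v) k = emb L1 L2 N2 (Ft v) k.
Proof. assert (Hl : supp_list L1 (emb L1 L2 N2 v) Al).
  { split; [apply NoDup_Al|split]. apply Al_circle. apply emb_supp. }
  rewrite (FF_list _ _ Hl). rewrite (Out v (emb L1 L2 N2 v)).
  - rewrite <- recon. apply sumC_ext. intros ks Hks. apply In_tuples in Hks. destruct Hks.
    rewrite P_Al; auto.
  - intros m Hm. rewrite emb_pt; auto. Qed.

Lemma FF_E2 : E2_poly_field L1 p FF.
Proof. split; [|split].
  - exists Pk. intros a l Hl k _. apply FF_list; auto.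
  - intros g a l Hg Hl k _. apply (FF_orth g a l); auto.
  - intros s t a l Hl k _. apply (FF_trans s t a l); auto. Qed.

End Pts.

Lemma forward (L1 L2 N2 : R) (h0 : 0 < N2) (h1 : N2 < L2) (h2 : L2 < L1)
  (hc : L1 * L1 = L2 * L2 + N2 * N2) (p : nat) (Ft : C6 -> C6) (F : field -> field) :
  E2_poly_field L1 p F ->
  (forall v k, on_circle L1 k -> F (emb L1 L2 N2 v) k = emb L1 L2 N2 (Ft v) k) ->
  forall th v v', ext_eq (rot_act th (emb L1 L2 N2 v)) (emb L1 L2 N2 v') ->
  ext_eq (rot_act th (emb L1 L2 N2 (Ft v))) (emb L1 L2 N2 (Ft v')).
Proof. intros [_ [Horth _]] Hrec th v v' Hvv' k.
  assert (Hl : supp_list L1 (emb L1 L2 N2 v) (Al L1 L2 N2)).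
  { split; [apply NoDup_Al; auto|split]. apply Al_circle; auto. apply emb_supp. }
  assert (Ot : orth (mat_tr (rot_mat th))) by (apply orth_tr, orth_rot).
  destruct (classic (on_circle L1 k)) as [Hk|Hk].
  - rewrite <- Hrec by auto.
    replace (emb L1 L2 N2 v') with (rot_act th (emb L1 L2 N2 v)) by (apply functional_extensionality; auto).
    unfold rot_act. rewrite (Horth (rot_mat th) (emb L1 L2 N2 v) (Al L1 L2 N2) (orth_rot th) Hl k Hk).
    unfold orth_act. rewrite Hrec; auto. apply on_circle_orth; auto.
  - unfold rot_act, orth_act. rewrite !emb_out; auto.
    + intros H. apply Hk. apply Al_circle in H; auto.
    + intros H. apply Hk. apply Al_circle in H; auto. apply on_circle_orth in H; auto. Qed.

Theorem mainTheorem18 (l1 l2 n2 p : nat) (Ft : C6 -> C6) :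
  (0 < n2)%nat -> (n2 < l2)%nat -> (l2 < l1)%nat ->
  (l1 * l1 = l2 * l2 + n2 * n2)%nat ->
  hom_poly_field_C6 p Ft ->
  Gamma_equivariant (INR l1) (INR l2) (INR n2) Ft ->
  ((exists F : field -> field,
      E2_poly_field (INR l1) p F /\
      (forall v k, on_circle (INR l1) k ->
         F (emb (INR l1) (INR l2) (INR n2) v) k = emb (INR l1) (INR l2) (INR n2) (Ft v) k))
   <->
   (forall (theta : R) (v v' : C6),
      ext_eq (rot_act theta (emb (INR l1) (INR l2) (INR n2) v)) (emb (INR l1) (INR l2) (INR n2) v') ->
      ext_eq (rot_act theta (emb (INR l1) (INR l2) (INR n2) (Ft v)))
             (emb (INR l1) (INR l2) (INR n2) (Ft v')))).
Proof. intros H0 H1 H2 Hc Hpoly HG.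
  assert (h0 : 0 < INR n2) by (apply lt_0_INR; auto).
  assert (h1 : INR n2 < INR l2) by (apply lt_INR; auto).
  assert (h2 : INR l2 < INR l1) by (apply lt_INR; auto).
  assert (hc : INR l1 * INR l1 = INR l2 * INR l2 + INR n2 * INR n2).
  { rewrite <- !mult_INR, <- plus_INR, Hc. auto. }
  split.
  - intros [F [HF Hrec]]. apply (forward _ _ _ h0 h1 h2 hc p Ft F HF Hrec).
  - intros Hrot. exists (FF (INR l1) (INR l2) (INR n2) p Ft). split.
    + apply FF_E2; auto.
    + intros v k _. apply FF_emb; auto. Qed.
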